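(* Let $\mathcal L$ be a finite distributive lattice, $\mathcal I$ a poset ideal and $\mathcal J$ a poset coideal of $\mathcal L$ such that $\mathcal I\cup\mathcal J=\mathcal L$. Then $H_{\mathcal I\cap\mathcal J}=H_{\mathcal I}\cap H_{\mathcal J}$ if and only if for each pair $p,q\in\mathcal L$ such that $q$ is a lower neighbor of $p$, either $p\in\mathcal I$ or $q\in\mathcal J$.
   Context: Let $P$ be the set of join-irreducible elements of $\mathcal L$ (elements with exactly one lower neighbor), with the induced order; for $p\in\mathcal L$ put $\ell(p)=\{q\in P:q\le p\}$. Let $K$ be a field and $S=K[x_p,y_p: p\in P]$ with all variables of degree 1. For $q\in\mathcal L$ put $u_q=\prod_{p\in\ell(q)}x_p\prod_{p\in P\setminus\ell(q)}y_p$, and for a subset $\mathcal S\subseteq\mathcal L$ let $H_{\mathcal S}$ be the ideal of $S$ generated by $\{u_q:q\in\mathcal S\}$ (the zero ideal if $\mathcal S=\emptyset$). $q$ is a lower neighbor of $p$ if $q<p$ and no element lies strictly between them. A poset ideal $\mathcal I$ satisfies: $\alpha\in\mathcal I,\ \beta<\alpha\Rightarrow\beta\in\mathcal I$; a poset coideal satisfies: $\alpha\in\mathcal J,\ \beta>\alpha\Rightarrow\beta\in\mathcal J$. *)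

(* Defs.v *)
From HB Require Import structures.
From mathcomp Require Import all_boot all_order all_algebra.
From mathcomp Require Import mpoly.

Set Implicit Arguments.
Unset Strict Implicit.
Unset Printing Implicit Defensive.

Import Order.Theory GRing.Theory.
Local Open Scope ring_scope.

Section HibiDefs.

Context {disp : Order.disp_t} (L : finDistrLatticeType disp).

Definition lower_neighbor (q p : L) : bool :=
  (q < p)%O && [forall r : L, ~~ ((q < r)%O && (r < p)%O)].

Definition join_irr (p : L) : bool :=
  #|[set q : L | lower_neighbor q p]| == 1%N.

Definition JI : Type := {p : L | join_irr p}.

Definition nJI : nat := #|{: JI}|.

Context (K : fieldType).

(* S = K[x_p, y_p : p in P]; x_p is variable number rank(p),
   y_p is variable number nJI + rank(p). *)
Definition Spoly := {mpoly K[nJI + nJI]}.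

Definition xv (p : JI) : Spoly := 'X_(lshift nJI (enum_rank p)).
Definition yv (p : JI) : Spoly := 'X_(rshift nJI (enum_rank p)).

Definition u_mon (q : L) : Spoly :=
  (\prod_(p : JI | (val p <= q)%O) xv p) *
  (\prod_(p : JI | ~~ (val p <= q)%O) yv p).

Definition H_ideal (A : {set L}) (f : Spoly) : Prop :=
  exists c : L -> Spoly, f = \sum_(q in A) c q * u_mon q.

Definition poset_ideal (I : {set L}) : Prop :=
  forall a b : L, a \in I -> (b < a)%O -> b \in I.

Definition poset_coideal (J : {set L}) : Prop :=
  forall a b : L, a \in J -> (a < b)%O -> b \in J.

End HibiDefs.

(* Main.v *)
Require Import Defs.
From HB Require Import structures.
From mathcomp Require Import all_boot all_order all_algebra.
From mathcomp Require Import mpoly.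
Set Implicit Arguments.
Unset Strict Implicit.
Unset Printing Implicit Defensive.
Import Order.Theory GRing.Theory.

Section Lat.
Context {disp : Order.disp_t} (L : finDistrLatticeType disp).
Local Open Scope order_scope.

Lemma ln_exists (a x : L) : a < x -> exists c, lower_neighbor c x && (a <= c).
Proof.
have [n] : exists n, (#|[set y : L | (a < y)%O && (y < x)%O]| < n)%N by exists #|[set y : L | (a < y)%O && (y < x)%O]|.+1.
elim: n a => [|n IH] a Hn ax //.
case Hl: (lower_neighbor a x); first by exists a; rewrite Hl lexx.
move: Hl; rewrite /lower_neighbor ax /= => /forallPn [r]; rewrite negbK => /andP[ar rx].
have [|c /andP[c1 c2]] := IH r _ rx.
  rewrite -ltnS; apply: leq_trans Hn; rewrite ltnS; apply: proper_card; apply/properP; split.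
    apply/subsetP => y; rewrite !inE => /andP[ry ->]; by rewrite (lt_trans ar ry).
  by exists r; rewrite !inE ?ltxx // ar rx.
by exists c; apply/andP; split => //; exact: le_trans (ltW ar) c2.
Qed.

Lemma ji_prime (j : L) : join_irr j -> forall a b, j <= a `|` b -> j <= a \/ j <= b.
Proof.
move=> /cards1P [c Hc] a b jab.
have lnc y : lower_neighbor y j -> y = c.
  move=> H; have : y \in [set q | lower_neighbor q j] by rewrite inE.
  by rewrite Hc inE => /eqP.
case ja: (j <= a); first by left.
case jb: (j <= b); first by right.
exfalso.
have lt1 : j `&` a < j by rewrite lt_neqAle leIl eq_meetl ja.
have lt2 : j `&` b < j by rewrite lt_neqAle leIl eq_meetl jb.
have [c1 /andP[L1 h1]] := ln_exists lt1.
have [c2 /andP[L2 h2]] := ln_exists lt2.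
have e1 := lnc _ L1; have e2 := lnc _ L2.
have : j `&` (a `|` b) <= c.
  by rewrite meetUr leUx; apply/andP; split; [rewrite -e1 | rewrite -e2].
move: L1; rewrite e1.
move=> /andP[cj _]; move: jab => /meet_idPl ->.
by move=> /(lt_le_trans cj); rewrite ltxx.
Qed.

Lemma ji_below (b : L) : forall x, ~~ (x <= b) -> exists j, [&& join_irr j, j <= x & ~~ (j <= b)].
Proof.
move=> x; have [n] : exists n, (#|[set y : L | (y < x)%O]| < n)%N by eexists; exact: ltnSn.
elim: n x => [|n IH] x Hn xb //.
case E: [exists c, lower_neighbor c x && ~~ (c <= b)].
  move/existsP: E => [c /andP[cx cb]].
  have cx' : c < x by case/andP: cx.
  have [|j /and3P[j1 j2 j3]] := IH c _ cb.
    rewrite -ltnS; apply: leq_trans Hn; rewrite ltnS; apply: proper_card; apply/properP; split.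
      apply/subsetP => y; rewrite !inE => yc; exact: lt_trans yc cx'.
    by exists c; rewrite !inE ?ltxx.
  by exists j; rewrite j1 j3 (le_trans j2 (ltW cx')).
exists x; rewrite lexx xb andbT.
have all_b c : lower_neighbor c x -> c <= b.
  by move=> H; apply: contraFT E => cb; apply/existsP; exists c; rewrite H cb.
have lt0 : x `&` b < x by rewrite lt_neqAle leIl eq_meetl (negbTE xb).
have [c0 /andP[L0 _]] := ln_exists lt0.
rewrite /join_irr andbT; apply/cards1P; exists c0; apply/setP => c; rewrite !inE.
apply/idP/eqP => [Lc|->//].
case: (eqVneq c c0) => [//|ne]; exfalso.
have cb := all_b _ Lc; have c0b := all_b _ L0.
case/andP: Lc => cx /forallP Fc. case/andP: L0 => c0x /forallP F0.
have : c0 `|` c <= x by rewrite leUx (ltW cx) (ltW c0x).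
rewrite le_eqVlt => /orP[/eqP E'|].
  by move: xb; rewrite -E' leUx c0b cb.
move=> ux. have := F0 (c0 `|` c); rewrite ux andbT => /negP; apply.
rewrite lt_neqAle leUl andbT eq_sym eq_joinl.
apply/negP => cc0; have := Fc c0; rewrite c0x andbT lt_neqAle cc0 andbT ne.
by [].
Qed.

Lemma le_ji (a b : L) : (forall j, join_irr j -> j <= a -> j <= b) -> a <= b.
Proof.
move=> H; apply: contraT => ab; have [j /and3P[j1 j2 j3]] := ji_below ab.
by rewrite (H j j1 j2) in j3.
Qed.

Lemma chain (I J : {set L}) : poset_ideal I -> I :|: J = setT ->
  (forall p q, lower_neighbor q p -> p \in I \/ q \in J) ->
  forall a q, a \in I -> q \notin I -> a <= q ->
  exists r, [&& r \in I, r \in J, a <= r & r <= q].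
Proof.
move=> HI HU HC a q aI.
have [n] : exists n, (#|[set y : L | (a < y)%O && (y <= q)%O]| < n)%N by eexists; exact: ltnSn.
elim: n q => [|n IH] q Hn qI aq //.
have aq' : a < q by rewrite lt_neqAle aq andbT; apply: contraNneq qI => <-.
have [c /andP[Lc ac]] := ln_exists aq'.
have cq : c < q by case/andP: Lc.
case cI: (c \in I).
  case: (HC _ _ Lc) => [qI'|cJ]; first by rewrite qI' in qI.
  by exists c; rewrite cI cJ ac (ltW cq).
have [|r /and4P[r1 r2 r3 r4]] := IH c _ (negbT cI) ac.
  rewrite -ltnS; apply: leq_trans Hn; rewrite ltnS; apply: proper_card; apply/properP; split.
    apply/subsetP => y; rewrite !inE => /andP[-> yc]; exact: le_trans yc (ltW cq).
  by exists q; rewrite !inE; [rewrite aq' lexx | rewrite (lt_geF cq) andbF].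
by exists r; rewrite r1 r2 r3 (le_trans r4 (ltW cq)).
Qed.

Lemma lat_interval (I J : {set L}) : poset_ideal I -> I :|: J = setT ->
  (forall p q, lower_neighbor q p -> p \in I \/ q \in J) ->
  forall p q, p \in I -> q \in J ->
  exists r, [&& r \in I, r \in J, p `&` q <= r & r <= p `|` q].
Proof.
move=> HI HU HC p q pI qJ.
case pJ: (p \in J); first by exists p; rewrite pI pJ leIl leUl.
case qI: (q \in I); first by exists q; rewrite qI qJ leIr leUr.
have aI : p `&` q \in I.
  by move: (leIl p q); rewrite le_eqVlt => /orP[/eqP->//|]; move/(HI _ _ pI).
have [r /and4P[r1 r2 r3 r4]] := chain HI HU HC aI (negbT qI) (leIr q p).
by exists r; rewrite r1 r2 r3 (le_trans r4 (leUr q p)).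
Qed.
End Lat.

Local Open Scope ring_scope.

Section Poly.
Context {disp : Order.disp_t} (L : finDistrLatticeType disp) (K : fieldType).

Local Notation N := (nJI L).

Definition em (q : L) : 'X_{1..N + N} :=
  (\sum_(p : JI L | (val p <= q)%O) U_(lshift N (enum_rank p)) +
   \sum_(p : JI L | ~~ (val p <= q)%O) U_(rshift N (enum_rank p)))%MM.

Lemma u_monE q : u_mon K q = 'X_[em q].
Proof.
rewrite /u_mon /em mpolyXD.
by rewrite !(big_morph (@mpolyX _ K) (@mpolyXD _ K) (@mpolyX0 _ K)).
Qed.

Lemma sum_eq1 (T : finType) (P : pred T) j : (\sum_(p | P p) (p == j : nat))%N = P j.
Proof.
rewrite big_mkcond /= (bigD1 j) //= eqxx big1 ?addn0; first by case: (P j).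
by move=> i /negbTE ->; case: (P i).
Qed.

Lemma emL q k : em q (lshift N k) = (val (enum_val k) <= q)%O.
Proof.
rewrite mnmDE !mnm_sumE [X in (_ + X)%N]big1 ?addn0; last first.
  by move=> p _; rewrite mnm1E (@eq_rlshift N N).
rewrite -(sum_eq1 (fun p : JI L => (val p <= q)%O)); apply: eq_bigr => p _.
rewrite mnm1E (inj_eq (@lshift_inj N N)).
congr nat_of_bool; apply/idP/idP => /eqP H; apply/eqP; [by rewrite -H enum_rankK | by rewrite H enum_valK].
Qed.

Lemma emR q k : em q (rshift N k) = ~~ (val (enum_val k) <= q)%O.
Proof.
rewrite mnmDE !mnm_sumE [X in (X + _)%N]big1 ?add0n; last first.
  by move=> p _; rewrite mnm1E (@eq_lrshift N N).
rewrite -(sum_eq1 (fun p : JI L => ~~ (val p <= q)%O)); apply: eq_bigr => p _.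
rewrite mnm1E (inj_eq (@rshift_inj N N)).
congr nat_of_bool; apply/idP/idP => /eqP H; apply/eqP; [by rewrite -H enum_rankK | by rewrite H enum_valK].
Qed.

Lemma coeff_nle (c : Spoly L K) e m : ~~ (e <= m)%MM -> (c * 'X_[e])@_m = 0.
Proof.
move=> H; rewrite mcoeffM big1 // => k Hm; rewrite mcoeffX.
case: eqP => [He|]; last by rewrite mulr0.
have : (e <= k.1 + k.2)%MM by rewrite He lem_addl.
by rewrite -(eqP Hm) (negbTE H).
Qed.

Lemma H_mono (A : {set L}) (f : Spoly L K) : H_ideal A f ->
  forall m, f@_m != 0 -> exists2 r, r \in A & (em r <= m)%MM.
Proof.
move=> [c ->] m; case E: [exists r in A, (em r <= m)%MM].
  by move=> _; case/existsP: E => r /andP[]; exists r.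
rewrite raddf_sum big1 ?eqxx // => r rA /=; rewrite u_monE coeff_nle //.
by apply: contraFN E => H; apply/existsP; exists r; rewrite rA.
Qed.

Lemma H_gen (A : {set L}) (f : Spoly L K) :
  (forall m, f@_m != 0 -> exists2 r, r \in A & (em r <= m)%MM) -> H_ideal A f.
Proof.
move=> H; rewrite [f]mpolyE big_seq; apply: big_ind.
- by exists (fun=> 0); rewrite big1 // => q _; rewrite mul0r.
- move=> x y [c1 ->] [c2 ->]; exists (fun q => c1 q + c2 q).
  by rewrite -big_split; apply: eq_bigr => q _; rewrite mulrDl.
move=> m; rewrite mcoeff_msupp => /H [r rA rm].
exists (fun q => if q == r then f@_m *: 'X_[m - em r] else 0).
rewrite (bigD1 r) //= eqxx big1 ?addr0; last first.
  by move=> q /andP[_ /negbTE ->]; rewrite mul0r.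
by rewrite u_monE -scalerAl -mpolyXD submK.
Qed.

End Poly.

Theorem theorem3p8 (disp : Order.disp_t) (L : finDistrLatticeType disp)
    (K : fieldType) (I J : {set L}) :
  poset_ideal I -> poset_coideal J -> I :|: J = [set: L] ->
  ((forall f : Spoly L K,
      @H_ideal _ L K (I :&: J) f <-> (@H_ideal _ L K I f /\ @H_ideal _ L K J f))
   <->
   (forall p q : L, lower_neighbor q p -> p \in I \/ q \in J)).
Proof.
move=> HI HJ HU; split.
- move=> Heq p q Lqp.
  case pI: (p \in I); first by left.
  case qJ: (q \in J); first by right.
  exfalso.
  have pJ : p \in J.
    have : p \in [set: L] by rewrite inE.
    by rewrite -HU inE pI.
  have qI : q \in I.
    have : q \in [set: L] by rewrite inE.
    by rewrite -HU inE qJ orbF.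
  set f := u_mon K p * u_mon K q.
  have hI : H_ideal I f.
    exists (fun r => if r == q then u_mon K p else 0).
    rewrite (bigD1 q) //= eqxx big1 ?addr0 // => r /andP[_ /negbTE ->].
    by rewrite mul0r.
  have hJ : H_ideal J f.
    exists (fun r => if r == p then u_mon K q else 0).
    rewrite /f mulrC (bigD1 p) //= eqxx big1 ?addr0 // => r /andP[_ /negbTE ->].
    by rewrite mul0r.
  have := (proj2 (Heq f)) (conj hI hJ) => /H_mono.
  move=> /(_ (em p + em q)%MM); rewrite /f !u_monE -mpolyXD mcoeffX eqxx oner_neq0.
  move=> /(_ isT) [r rIJ rle].
  rewrite inE in rIJ; case/andP: rIJ => rI rJ.
  have qp : (q <= p)%O by case/andP: Lqp => /ltW.
  have rp : (r <= p)%O.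
    apply: le_ji => j jj jr.
    move/mnm_lepP: rle => /(_ (lshift (nJI L) (enum_rank (exist _ j jj : JI L)))).
    rewrite mnmDE !emL enum_rankK /= jr.
    case jp: (j <= p)%O => //; case jq: (j <= q)%O => //.
    by rewrite (le_trans jq qp) in jp.
  have qr : (q <= r)%O.
    apply: le_ji => j jj jq.
    move/mnm_lepP: rle => /(_ (rshift (nJI L) (enum_rank (exist _ j jj : JI L)))).
    rewrite mnmDE !emR enum_rankK /= jq (le_trans jq qp) /=.
    by case: (j <= r)%O.
  case/andP: Lqp => _ /forallP /(_ r); rewrite !lt_neqAle qr rp !andbT.
  case: (eqVneq q r) => [E|_]; first by rewrite -E qJ in rJ.
  case: (eqVneq r p) => [E|_]; first by rewrite E pI in rI.
  by [].
- move=> HC f; split.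
  + move=> H; split; apply: H_gen => m /(H_mono H) [r];
      rewrite inE => /andP[rI rJ] rm; by exists r.
  + move=> [hI hJ]; apply: H_gen => m fm.
    have [p pI pm] := H_mono hI fm; have [q qJ qm] := H_mono hJ fm.
    have [r /and4P[rI rJ r1 r2]] := lat_interval HI HU HC pI qJ.
    exists r; first by rewrite inE rI rJ.
    apply/mnm_lepP => i; rewrite -(splitK i); case: (split i) => k /=.
    * rewrite emL; case jr: (val (enum_val k) <= r)%O => //=.
      have [jp|jq] := ji_prime (valP (enum_val k)) (le_trans jr r2).
        by move/mnm_lepP: pm => /(_ (lshift (nJI L) k)); rewrite emL jp.
      by move/mnm_lepP: qm => /(_ (lshift (nJI L) k)); rewrite emL jq.
    * rewrite emR; case jr: (val (enum_val k) <= r)%O => //=.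
      have : ~~ (val (enum_val k) <= p)%O || ~~ (val (enum_val k) <= q)%O.
        rewrite -negb_and; apply: contraFN jr => H.
        by apply: le_trans r1; rewrite lexI.
      case/orP => [jp|jq].
        by move/mnm_lepP: pm => /(_ (rshift (nJI L) k)); rewrite emR jp.
      by move/mnm_lepP: qm => /(_ (rshift (nJI L) k)); rewrite emR jq.
Qed.
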